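(* Let $d,n\in\mathbb{N}_{\ge1}$. For any ReLU FNN $f_{FF}:\mathbb{R}^{dn}\to\mathbb{R}$ with depth $L$, width $W$ and weight bound $B$, there exists a Transformer $\boldsymbol T^{(FF)}:\mathbb{R}^{(d+n)\times n}\to\mathbb{R}^{1\times n}$ of length $1$ with size $\{(L_0,W_0),(H_1,S_1),(L_1,W_1)\}=\{(2,2dn),(1,dn),(L,\max\{W,2dn\})\}$ and dimension vector $(d+n,d+n,2dn,1)$ such that for any $\boldsymbol X\in[0,1]^{d\times n}$, $$\boldsymbol T^{(FF)}\left(\begin{pmatrix}\boldsymbol X\\ \boldsymbol I_{n\times n}-\boldsymbol 1_{n\times n}\end{pmatrix}\right)=f_{FF}(\boldsymbol X^{(flt)})\boldsymbol 1_{1\times n},$$ where $\boldsymbol X^{(flt)}=(x_{11},\dots,x_{1n},x_{21},\dots,x_{2n},\dots,x_{d1},\dots,x_{dn})^\top\in\mathbb{R}^{dn}$. Furthermore, $B_{FF}=\max\{B,1\}$ and $B_{SA}=n$.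
   Context: $\boldsymbol 1_{n\times n}$ is the all-ones matrix. ReLU FNN of depth $L$, width $W$: $f_0=x$, $f_l=\sigma_R(W_lf_{l-1}+b_l)$ ($1\le l\le L-1$), $f=W_Lf_{L-1}+b_L$ with hidden width $W$, $\sigma_R(x)=\max\{x,0\}$; weight bound = max absolute parameter value. Transformers: a feedforward block applies such a net column-wise; a self-attention layer on $\mathbb{R}^{D\times n}$ with $H$ heads of size $S$ is $X\mapsto X+\sum_{h=1}^HW_O^{(h)}W_V^{(h)}X\sigma_S(X^\top W_K^{(h)\top}W_Q^{(h)}X)$ with $W_O^{(h)}\in\mathbb{R}^{D\times S}$, $W_V^{(h)},W_K^{(h)},W_Q^{(h)}\in\mathbb{R}^{S\times D}$ and $\sigma_S$ the column-wise softmax; embedding layer $X\mapsto W_{EB}X+B_{EB}$. A Transformer of length $K$ is $\mathcal F_{FF}^{(K)}\circ\mathcal F_{SA}^{(K)}\circ\cdots\circ\mathcal F_{SA}^{(1)}\circ\mathcal F_{FF}^{(0)}\circ\mathcal F_{EB}$; size lists depths/widths $(L_k,W_k)$ of $\mathcal F_{FF}^{(k)}$ and head numbers/sizes $(H_k,S_k)$ of $\mathcal F_{SA}^{(k)}$; dimension vector $(d_{in},d_0,\dots,d_K,d_{out})$ means $\mathcal F_{EB}:\mathbb{R}^{d_{in}\times n}\to\mathbb{R}^{d_0\times n}$, $\mathcal F_{FF}^{(k)}:\mathbb{R}^{d_k\times n}\to\mathbb{R}^{d_{k+1}\times n}$ ($d_{K+1}=d_{out}$), $\mathcal F_{SA}^{(k)}$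 on $\mathbb{R}^{d_k\times n}$. $B_{FF},B_{SA}$ bound absolute values of parameters of feedforward blocks and attention layers. *)

(* Defs.v *)
From mathcomp Require Import all_boot all_order all_algebra.
From mathcomp Require Import all_classical all_reals all_analysis.
Unset Printing Implicit Defensive.
Import Order.TTheory GRing.Theory Num.Theory.
Local Open Scope ring_scope.

Definition relu (R : realType) (x : R) : R := Num.max x 0.
Arguments relu {R}.

(* Parameters of a ReLU FNN: weight (l, i, j) = (W_l)_{ij}, bias (l, i) = (b_l)_i,
   layers l = 1..L.  Only the entries within the layer dimensions are used. *)
Record fnn (R : realType) := FNN {
  fnn_w : nat -> nat -> nat -> R;
  fnn_b : nat -> nat -> R }.
Arguments FNN {R}. Arguments fnn_w {R}. Arguments fnn_b {R}.

Definition fnn_dim (din W dout L l : nat) : nat :=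
  if l == 0%N then din else if l == L then dout else W.

Fixpoint fnn_hidden (R : realType) (N : fnn R) (din W dout L : nat)
    (x : nat -> R) (l : nat) : nat -> R :=
  match l with
  | 0%N => x
  | l'.+1 => fun i => relu (\sum_(j < fnn_dim din W dout L l')
                 fnn_w N l'.+1 i j * fnn_hidden R N din W dout L x l' j
               + fnn_b N l'.+1 i)
  end.
Arguments fnn_hidden {R}.

Definition fnn_eval (R : realType) (N : fnn R) (din W dout L : nat)
    (x : nat -> R) : nat -> R :=
  fun i => \sum_(j < fnn_dim din W dout L L.-1)
             fnn_w N L i j * fnn_hidden N din W dout L x L.-1 j + fnn_b N L i.
Arguments fnn_eval {R}.

Definition fnn_bounded (R : realType) (N : fnn R) (din W dout L : nat) (B : R) :=
  forall l, (1 <= l <= L)%N -> forall i, (i < fnn_dim din W dout L l)%N ->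
    `|fnn_b N l i| <= B /\
    (forall j, (j < fnn_dim din W dout L l.-1)%N -> `|fnn_w N l i j| <= B).
Arguments fnn_bounded {R}.

Definition ofvec (R : realType) (D : nat) (v : 'I_D -> R) : nat -> R :=
  fun k => if (insub k : option 'I_D) is Some k' then v k' else 0.
Arguments ofvec {R D}.

Definition flatten_mx (R : realType) (d n : nat) (X : 'M[R]_(d, n)) : nat -> R :=
  fun k => ofvec (fun i : 'I_d => ofvec (fun j : 'I_n => X i j) (k %% n)) (k %/ n).
Arguments flatten_mx {R d n}.

Definition ff_block (R : realType) (N : fnn R) (din W dout L n : nat)
    (X : 'M[R]_(din, n)) : 'M[R]_(dout, n) :=
  \matrix_(i < dout, j < n) fnn_eval N din W dout L (ofvec (fun k => X k j)) i.
Arguments ff_block {R} N din W dout L {n}.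

Definition softmax_col (R : realType) (n : nat) (A : 'M[R]_(n, n)) : 'M[R]_(n, n) :=
  \matrix_(i < n, j < n) (expR (A i j) / \sum_(k < n) expR (A k j)).
Arguments softmax_col {R n}.

Definition self_attn (R : realType) (D n H S : nat)
    (WO : 'I_H -> 'M[R]_(D, S)) (WV WK WQ : 'I_H -> 'M[R]_(S, D))
    (X : 'M[R]_(D, n)) : 'M[R]_(D, n) :=
  X + \sum_(h < H) (WO h *m WV h *m X *m
                    softmax_col (X^T *m (WK h)^T *m WQ h *m X)).
Arguments self_attn {R D n H S}.

(* Transformer of length 1 with dimension vector (din, d0, d1, dout),
   H1 heads of size S1. *)
Record tf1 (R : realType) (din d0 d1 dout n H S : nat) := TF1 {
  tf_WEB : 'M[R]_(d0, din);
  tf_BEB : 'M[R]_(d0, n);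
  tf_FF0 : fnn R;
  tf_WO : 'I_H -> 'M[R]_(d1, S);
  tf_WV : 'I_H -> 'M[R]_(S, d1);
  tf_WK : 'I_H -> 'M[R]_(S, d1);
  tf_WQ : 'I_H -> 'M[R]_(S, d1);
  tf_FF1 : fnn R }.
Arguments tf_WEB {R din d0 d1 dout n H S}. Arguments tf_BEB {R din d0 d1 dout n H S}.
Arguments tf_FF0 {R din d0 d1 dout n H S}. Arguments tf_FF1 {R din d0 d1 dout n H S}.
Arguments tf_WO {R din d0 d1 dout n H S}. Arguments tf_WV {R din d0 d1 dout n H S}.
Arguments tf_WK {R din d0 d1 dout n H S}. Arguments tf_WQ {R din d0 d1 dout n H S}.

Definition tf1_eval (R : realType) (din d0 d1 dout n H S : nat)
    (T : tf1 R din d0 d1 dout n H S) (L0 W0 L1 W1 : nat)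
    (X : 'M[R]_(din, n)) : 'M[R]_(dout, n) :=
  ff_block (tf_FF1 T) d1 W1 dout L1
    (self_attn (tf_WO T) (tf_WV T) (tf_WK T) (tf_WQ T)
       (ff_block (tf_FF0 T) d0 W0 d1 L0 (tf_WEB T *m X + tf_BEB T))).
Arguments tf1_eval {R din d0 d1 dout n H S}.

Definition tf1_bounded_FF (R : realType) (din d0 d1 dout n H S : nat)
    (T : tf1 R din d0 d1 dout n H S) (L0 W0 L1 W1 : nat) (BFF : R) :=
  fnn_bounded (tf_FF0 T) d0 W0 d1 L0 BFF /\ fnn_bounded (tf_FF1 T) d1 W1 dout L1 BFF.
Arguments tf1_bounded_FF {R din d0 d1 dout n H S}.

Definition tf1_bounded_SA (R : realType) (din d0 d1 dout n H S : nat)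
    (T : tf1 R din d0 d1 dout n H S) (BSA : R) :=
  forall h : 'I_H,
    (forall i j, `|tf_WO T h i j| <= BSA) /\
    (forall i j, `|tf_WV T h i j| <= BSA) /\
    (forall i j, `|tf_WK T h i j| <= BSA) /\
    (forall i j, `|tf_WQ T h i j| <= BSA).

Arguments tf1_bounded_SA {R din d0 d1 dout n H S}.

(* Main.v *)
Require Import Defs.
From mathcomp Require Import all_boot all_order all_algebra.
From mathcomp Require Import all_classical all_reals all_analysis.
Import Order.TTheory GRing.Theory Num.Theory.
Local Open Scope ring_scope.

Lemma sum_cut (R : realType) m k (F : nat -> R) : (k <= m)%N ->
  \sum_(j < m) (if (j < k)%N then F j else 0) = \sum_(j < k) F j.
Proof. by move=> hk; rewrite (big_ord_widen m F hk) [RHS]big_mkcond. Qed.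

Lemma sum_pick (R : realType) m (F : 'I_m -> R) (i0 : 'I_m) :
  \sum_(j < m) (if (j : nat) == (i0 : nat) then F j else 0) = F i0.
Proof.
rewrite (bigD1 i0) //= eqxx big1 ?addr0 // => j hj.
by rewrite ifN.
Qed.

Arguments sum_pick {R m}.
Lemma natb_mul (R : realType) (b : bool) (x : R) : (b%:R * x) = if b then x else 0.
Proof. by case: b; rewrite ?mul1r ?mul0r. Qed.

Lemma ofvec_nat (R : realType) D (v : 'I_D -> R) k (hk : (k < D)%N) :
  ofvec v k = v (Ordinal hk).
Proof. by have := valK (Ordinal hk); rewrite /ofvec /= => ->. Qed.

Definition w0 (R : realType) (d n : nat) : nat -> nat -> nat -> R :=
  fun l k j => if l == 1%N then
    (if (d * n <= k)%N then ((j == (k - d * n) %/ n)%N%:R + (j == d + (k - d * n) %% n)%N%:R)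
     else 0)
  else (k == j)%:R.

Definition N0 (R : realType) (d n : nat) : fnn R := FNN (w0 R d n) (fun _ _ => 0).

Definition Xf (R : realType) d n (X : 'M[R]_(d, n)) (k : nat) (c : 'I_n) : R :=
  ofvec (fun i : 'I_d => X i c) k.
Arguments Xf {R d n}.

Lemma ff0_entry (R : realType) d n (X : 'M[R]_(d, n)) :
  (0 < n)%N -> (forall i j, 0 <= X i j <= 1) ->
  forall (r : 'I_(2 * d * n)) (c : 'I_n),
  ff_block (N0 R d n) (d + n) (2 * d * n) (2 * d * n) 2 (col_mx X (1%:M - const_mx 1)) r c
  = if (d * n <= r)%N && ((r - d * n) %% n == c)%N then Xf X ((r - d * n) %/ n) c else 0.
Proof.
move=> n0 Xb r c.
rewrite /ff_block mxE /fnn_eval /fnn_dim /= addr0.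
under eq_bigr => j _ do rewrite /w0 /= natb_mul eq_sym.
rewrite (sum_pick (fun j : 'I_(2 * d * n) => _) r).
rewrite /= addr0 /relu.
case: (leqP (d * n) r) => hr /=; last first.
  by rewrite big1 ?maxxx // => j _; rewrite mul0r.
have rlt : (r - d * n < d * n)%N.
  have h : (r < d * n + d * n)%N by rewrite addnn -mul2n mulnA.
  by rewrite ltn_subLR.
have ha : ((r - d * n) %/ n < d)%N by rewrite ltn_divLR.
have hb' : ((r - d * n) %% n < n)%N by rewrite ltn_pmod.
have ha2 : ((r - d * n) %/ n < d + n)%N by apply: (leq_trans ha); rewrite leq_addr.
have hb2 : (d + (r - d * n) %% n < d + n)%N by rewrite ltn_add2l.
under eq_bigr => j _ do rewrite mulrDl !natb_mul.
rewrite big_split /=.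
rewrite (sum_pick (fun j : 'I_(d + n) => _) (Ordinal ha2)).
rewrite (sum_pick (fun j : 'I_(d + n) => _) (Ordinal hb2)).
rewrite !ofvec_nat.
have -> : Ordinal ha2 = lshift n (Ordinal ha) by apply: val_inj.
have -> : Ordinal hb2 = rshift d (Ordinal hb') by apply: val_inj.
rewrite col_mxEu col_mxEd !mxE /Xf ofvec_nat.
have /andP[X0 X1] := Xb (Ordinal ha) c.
have -> : (Ordinal hb' == c) = (((r - d * n) %% n)%N == c) by [].
case: eqP => _ /=.
  by rewrite subrr addr0 max_l.
rewrite sub0r max_r // subr_le0 //.
Qed.

Definition WO (R : realType) d n : 'M[R]_(2 * d * n, d * n) :=
  \matrix_(i, k) if (i : nat) == (k : nat) then n%:R else 0.
Definition WV (R : realType) d n : 'M[R]_(d * n, 2 * d * n) :=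
  \matrix_(k, s) if (s : nat) == (d * n + k)%N then 1 else 0.

Lemma softmax0 (R : realType) n : (0 < n)%N ->
  softmax_col (0 : 'M[R]_n) = const_mx (n%:R^-1).
Proof.
move=> n0; apply/matrixP => i j; rewrite !mxE.
under eq_bigr => k _ do rewrite mxE expR0.
by rewrite expR0 sumr_const card_ord div1r.
Qed.

Lemma sa_entry (R : realType) d n (Y : 'M[R]_(2 * d * n, n)) :
  (0 < n)%N ->
  forall (r : 'I_(2 * d * n)) (c : 'I_n) (hr : (r < d * n)%N)
    (hr2 : (d * n + r < 2 * d * n)%N),
  self_attn (fun _ : 'I_1 => WO R d n) (fun _ => WV R d n) (fun _ => 0) (fun _ => 0) Y r c
  = Y r c + \sum_(c' < n) Y (Ordinal hr2) c'.
Proof.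
move=> n0 r c hr hr2.
rewrite /self_attn big_ord1 trmx0 mulmx0 mul0mx softmax0 //.
rewrite !mxE; congr (_ + _).
have nz : (n%:R : R) != 0 by rewrite pnatr_eq0 -lt0n.
apply: eq_bigr => c' _; rewrite !mxE.
have inner : forall s : 'I_(2 * d * n),
    \sum_(k < d * n) WO R d n r k * WV R d n k s
    = if (s : nat) == (Ordinal hr2 : nat) then n%:R else 0.
  move=> s.
  under eq_bigr => k _ do rewrite !mxE.
  rewrite (eq_bigr (fun k : 'I_(d * n) =>
     if (k : nat) == (Ordinal hr : nat) then n%:R * (if (s : nat) == (d * n + k)%N then 1 else 0) else 0)); last first.
    by move=> k _; rewrite eq_sym; case: ifP; rewrite ?mul0r.
  rewrite (sum_pick (fun k : 'I_(d * n) => _) (Ordinal hr)) /=.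
  by case: ifP; rewrite ?mulr1 ?mulr0.

under eq_bigr => s _ do rewrite mxE inner.
rewrite (eq_bigr (fun s : 'I_(2 * d * n) =>
     if (s : nat) == (Ordinal hr2 : nat) then n%:R * Y s c' else 0)); last first.
  by move=> s _; case: ifP; rewrite ?mul0r.
rewrite (sum_pick (fun s : 'I_(2 * d * n) => _) (Ordinal hr2)).
by rewrite mulrAC mulfV // mul1r.
Qed.

Definition N1 (R : realType) (N : fnn R) dinN WN L : fnn R :=
  FNN (fun l i j => if (i < fnn_dim dinN WN 1 L l)%N && (j < fnn_dim dinN WN 1 L l.-1)%N
                    then fnn_w N l i j else 0)
      (fun l i => if (i < fnn_dim dinN WN 1 L l)%N then fnn_b N l i else 0).
Arguments N1 {R}.

Lemma ff1_eq (R : realType) (N : fnn R) dinN WN din1 W1 L (v u : nat -> R) :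
  (0 < L)%N -> (dinN <= din1)%N -> (WN <= W1)%N -> (forall j, (j < dinN)%N -> v j = u j) ->
  fnn_eval (N1 N dinN WN L) din1 W1 1 L v 0 = fnn_eval N dinN WN 1 L u 0.
Proof.
move=> L0 hd hw hv.
have dle : forall l, (fnn_dim dinN WN 1 L l <= fnn_dim din1 W1 1 L l)%N.
  by move=> l; rewrite /fnn_dim; case: ifP => //; case: ifP.
set h1 := fnn_hidden (N1 N dinN WN L) din1 W1 1 L v.
set hN := fnn_hidden N dinN WN 1 L u.
have key : forall m i, (i < fnn_dim dinN WN 1 L m)%N ->
    (forall j, (j < fnn_dim dinN WN 1 L m.-1)%N -> h1 m.-1 j = hN m.-1 j) ->
    \sum_(j < fnn_dim din1 W1 1 L m.-1) fnn_w (N1 N dinN WN L) m i j * h1 m.-1 j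
    = \sum_(j < fnn_dim dinN WN 1 L m.-1) fnn_w N m i j * hN m.-1 j.
  move=> m i hi IH.
  rewrite (eq_bigr (fun j : 'I_(fnn_dim din1 W1 1 L m.-1) =>
      if (j < fnn_dim dinN WN 1 L m.-1)%N then fnn_w N m i j * hN m.-1 j else 0)).
    by rewrite (sum_cut _ _ _ (fun j => fnn_w N m i j * hN m.-1 j) (dle _)).
  move=> j _; rewrite /= hi /=.
  by case: ifP => [hj|_]; rewrite ?mul0r ?IH.
have hid : forall l j, (j < fnn_dim dinN WN 1 L l)%N -> h1 l j = hN l j.
  elim=> [|l IH] j hj; first by rewrite /h1 /hN /=; apply: hv; move: hj; rewrite /fnn_dim eqxx.
  rewrite /h1 /hN /= -/h1 -/hN.
  by have := key l.+1 j hj IH; rewrite /= => ->; rewrite hj.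
rewrite /fnn_eval -/h1 -/hN.
have i0 : (0 < fnn_dim dinN WN 1 L L)%N by rewrite /fnn_dim eqxx; case: eqP => // e; move: L0; rewrite e.
rewrite (key L 0%N i0 (hid _)) /= i0 //.
Qed.

Theorem lemma8 (R : realType) (d n L W : nat) (B : R) (N : fnn R) :
  (0 < d)%N -> (0 < n)%N -> (0 < L)%N ->
  fnn_bounded N (d * n) W 1 L B ->
  exists T : tf1 R (d + n) (d + n) (2 * d * n) 1 n 1 (d * n),
    tf1_bounded_FF T 2 (2 * d * n) L (maxn W (2 * d * n)) (Num.max B 1) /\
    tf1_bounded_SA T n%:R /\
    forall X : 'M[R]_(d, n), (forall i j, 0 <= X i j <= 1) ->
      tf1_eval T 2 (2 * d * n) L (maxn W (2 * d * n))
        (col_mx X (1%:M - const_mx 1))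
      = const_mx (fnn_eval N (d * n) W 1 L (flatten_mx X) 0%N).
Proof.
move=> d0 n0 L0 hB.
exists (@TF1 R (d + n) (d + n) (2 * d * n) 1 n 1 (d * n) 1%:M 0 (N0 R d n)
  (fun _ => WO R d n) (fun _ => WV R d n) (fun _ => 0) (fun _ => 0) (N1 N (d * n) W L)).
have h01 : forall b : bool, `|(b%:R : R)| <= Num.max B 1.
  by case; rewrite ?normr1 ?normr0 le_max ?lexx ?ler01 orbT.
have hBm : B <= Num.max B 1 by rewrite le_max lexx.
have dnle : (d * n <= 2 * d * n)%N by rewrite -mulnA mul2n -addnn leq_addr.
split; [split|split].
- move=> l _ i hi; split; first by rewrite /= normr0 le_max ler01 orbT.
  move=> j hj; rewrite /= /w0.
  case: ifP => [/eqP hl1|_]; last exact: h01.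
  case: ifP => [hdi|_]; last by rewrite normr0 le_max ler01 orbT.
  have hi2 : (i < d * n + d * n)%N by move: hi; rewrite hl1 /fnn_dim /= addnn -mul2n mulnA.
  have hlt : ((i - d * n) %/ n < d)%N by rewrite ltn_divLR // ltn_subLR.
  case E: (j == (i - d * n) %/ n)%N.
    have -> : (j == d + (i - d * n) %% n)%N = false.
      apply/negbTE; move/eqP: E => ->; rewrite neq_ltn; apply/orP; left.
      exact: leq_trans hlt (leq_addr _ _).
    by rewrite addr0 h01.
  by rewrite add0r h01.
- move=> l hl i hi; rewrite /=; split.
    case: ifP => h; last by rewrite normr0 le_max ler01 orbT.
    exact: le_trans (hB l hl i h).1 hBm.
  move=> j hj; case: ifP => [/andP[h1 h2]|_]; last by rewrite normr0 le_max ler01 orbT.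
  exact: le_trans ((hB l hl i h1).2 j h2) hBm.
- move=> h; split; [|split; [|split]] => i j; rewrite !mxE.
  + by case: ifP; rewrite ?normr0 ?ler0n // normr_nat.
  + by case: ifP; rewrite ?normr0 ?ler0n // normr1 ler1n.
  + by rewrite normr0 ler0n.
  + by rewrite normr0 ler0n.
move=> X Xb; rewrite /tf1_eval /= mul1mx addr0.
apply/matrixP => i c; rewrite (ord1 i).
rewrite {1}/ff_block mxE mxE.
apply: ff1_eq; [exact: L0|exact: dnle|exact: leq_maxl|].
move=> j hj.
have hj2 : (j < 2 * d * n)%N by apply: leq_trans dnle.
have hr2 : (d * n + j < 2 * d * n)%N by rewrite -mulnA mul2n -addnn ltn_add2l.
rewrite (ofvec_nat _ _ _ _ hj2) (sa_entry _ _ _ _ n0 (Ordinal hj2) c hj hr2).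
rewrite ff0_entry //= leqNgt hj /= add0r.
under eq_bigr => c' _ do rewrite ff0_entry //= leq_addr addKn /= eq_sym.
have ha : (j %/ n < d)%N by rewrite ltn_divLR.
have hb : (j %% n < n)%N by rewrite ltn_pmod.
rewrite (sum_pick (fun c' : 'I_n => _) (Ordinal hb)).
by rewrite /Xf /flatten_mx (ofvec_nat _ _ _ _ ha) (ofvec_nat _ _ _ _ ha) (ofvec_nat _ _ _ _ hb).

Qed.
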